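(* Consider line-point incidence pairs $(\ell,p)$, where $\ell$ is a non-vertical line in $\mathbb{R}^2$ and $p\in\ell$; such a pair is parametrized by the triple $(a,b,\kappa)\in\mathbb{R}^3$, where $p=(a,b)$ and $\kappa$ is the slope of $\ell$. For such a pair with parameters $(a,b,\kappa)$, let $\sigma_{\ell,p}\subset\mathbb{R}^3$ be the set of points $(x,y,w)\in\mathbb{R}^3$ satisfying $$\bigl(y-b-\kappa(x-a)\bigr)\bigl(y-b-w(x-a)\bigr)=2(w-\kappa)\quad\text{and}\quad w\neq\kappa.$$ Let $(\ell_1,p_1)$ and $(\ell_2,p_2)$ be two distinct such incidence pairs, let $\gamma=\sigma_{\ell_1,p_1}\cap\sigma_{\ell_2,p_2}$, and assume $\gamma$ is non-empty. If $(\ell,p)$ is an incidence pair (of the same kind) with $\sigma_{\ell,p}\supseteq\gamma$, then $(\ell,p)=(\ell_1,p_1)$ or $(\ell,p)=(\ell_2,p_2)$.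
   Context: The surface $\sigma_{\ell,p}$ is the locus of parameter triples $(x,y,w)$ of pairs $(\ell',p')$ ($p'=(x,y)$, $\ell'$ of slope $w$ through $p'$) such that the triangle with vertices $p$, $p'$, $\ell\cap\ell'$ has area $1$ with $\vec{op'}$ counterclockwise to $\vec{op}$, where $o=\ell\cap\ell'$. *)

(* Defs.v *)
From Stdlib Require Import Reals.
Open Scope R_scope.

(* An incidence pair (l, p), l non-vertical line, p = (a,b) on l,
   parametrized by (a, b, kappa) where kappa is the slope of l. *)
Definition incidence_pair : Type := (R * R * R)%type.

Definition sigma_lp (q : incidence_pair) (x y w : R) : Prop :=
  let '(a, b, k) := q in
  (y - b - k * (x - a)) * (y - b - w * (x - a)) = 2 * (w - k) /\ w <> k.

(* Main.v *)
Require Import Defs.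
From Stdlib Require Import Reals Lra Lia Psatz Classical.
Open Scope R_scope.

Lemma ev_pos4 c4 c3 c2 c1 c0 : 0 < c4 -> exists H, forall t, H <= t ->
  0 < c4*t^4 + c3*t^3 + c2*t^2 + c1*t + c0.
Proof.
  intros Hc.
  set (S := Rabs c3 + Rabs c2 + Rabs c1 + Rabs c0).
  assert (HS : 0 <= S) by (unfold S; pose proof (Rabs_pos c3); pose proof (Rabs_pos c2);
     pose proof (Rabs_pos c1); pose proof (Rabs_pos c0); lra).
  exists (1 + S / c4). intros t Ht.
  assert (HSc : S / c4 * c4 = S) by (field; lra).
  assert (Ht1 : 1 <= t) by (assert (0 <= S/c4) by (unfold Rdiv; apply Rmult_le_pos; [lra|apply Rlt_le, Rinv_0_lt_compat; lra]); lra).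
  assert (Hk : S <= c4 * (t - 1)) by nra.
  assert (h3 : 0 <= (c3 + Rabs c3)) by (pose proof (Rle_abs (-c3)); rewrite Rabs_Ropp in *; lra).
  assert (h2 : 0 <= (c2 + Rabs c2)) by (pose proof (Rle_abs (-c2)); rewrite Rabs_Ropp in *; lra).
  assert (h1 : 0 <= (c1 + Rabs c1)) by (pose proof (Rle_abs (-c1)); rewrite Rabs_Ropp in *; lra).
  assert (h0 : 0 <= (c0 + Rabs c0)) by (pose proof (Rle_abs (-c0)); rewrite Rabs_Ropp in *; lra).
  assert (t1 : 1 <= t^2) by nra.
  assert (t2 : t^2 <= t^3) by (simpl; nra).
  assert (t0 : t <= t^2) by (simpl; nra).
  assert (pa : 0 <= (c3 + Rabs c3) * t^3) by (apply Rmult_le_pos; nra).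
  assert (pb : 0 <= (c2 + Rabs c2) * t^2) by (apply Rmult_le_pos; nra).
  assert (pc : 0 <= (c1 + Rabs c1) * t) by (apply Rmult_le_pos; nra).
  assert (qb : Rabs c2 * t^2 <= Rabs c2 * t^3) by (apply Rmult_le_compat_l; [apply Rabs_pos|lra]).
  assert (qc : Rabs c1 * t <= Rabs c1 * t^3) by (apply Rmult_le_compat_l; [apply Rabs_pos|lra]).
  assert (qd : Rabs c0 <= Rabs c0 * t^3) by (pose proof (Rabs_pos c0); nra).
  assert (main : S * t^3 <= c4 * (t-1) * t^3) by (apply Rmult_le_compat_r; [nra|lra]).
  assert (c4 * t^3 > 0) by (apply Rmult_lt_0_compat; [lra|nra]).
  unfold S in main.
  replace (c4*t^4) with (c4*t*t^3) by ring.
  nra.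
Qed.

Lemma ev_nz3_base e3 e2 e1 e0 : (e3 <> 0 \/ e2 <> 0 \/ e1 <> 0 \/ e0 <> 0) ->
  exists H, forall t, H <= t -> e3*t^3 + e2*t^2 + e1*t + e0 <> 0.
Proof.
  intros Hnz.
  destruct (Req_dec e3 0) as [z3|n3].
  - destruct (Req_dec e2 0) as [z2|n2].
    + destruct (Req_dec e1 0) as [z1|n1].
      * exists 0. intros t _. subst. destruct Hnz as [h|[h|[h|h]]]; try (exfalso; now apply h).
        replace (0*t^3+0*t^2+0*t+e0) with e0 by ring. exact h.
      * destruct (ev_pos4 (e1*e1) (e1*e0) 0 0 0) as [H HH].
        { assert (e1*e1 <> 0) by (apply Rmult_integral_contrapositive; tauto).
          pose proof (Rle_0_sqr e1); unfold Rsqr in *; lra. }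
        exists (Rmax H 1). intros t Ht Hp.
        assert (H <= t) by (pose proof (Rmax_l H 1); lra).
        assert (1 <= t) by (pose proof (Rmax_r H 1); lra).
        specialize (HH t H0). subst.
        assert (e1*t^3*(0*t^3+0*t^2+e1*t+e0) = e1*e1*t^4+e1*e0*t^3+0*t^2+0*t+0) by ring.
        rewrite Hp in H2. lra.
    + destruct (ev_pos4 (e2*e2) (e2*e1) (e2*e0) 0 0) as [H HH].
      { assert (e2*e2 <> 0) by (apply Rmult_integral_contrapositive; tauto).
        pose proof (Rle_0_sqr e2); unfold Rsqr in *; lra. }
      exists (Rmax H 1). intros t Ht Hp.
      assert (H <= t) by (pose proof (Rmax_l H 1); lra).
      specialize (HH t H0). subst.
      assert (e2*t^2*(0*t^3+e2*t^2+e1*t+e0) = e2*e2*t^4+e2*e1*t^3+e2*e0*t^2+0*t+0) by ring.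
      rewrite Hp in H1.
      lra.
  - destruct (ev_pos4 (e3*e3) (e3*e2) (e3*e1) (e3*e0) 0) as [H HH].
    { assert (e3*e3 <> 0) by (apply Rmult_integral_contrapositive; tauto).
      pose proof (Rle_0_sqr e3); unfold Rsqr in *; lra. }
    exists H. intros t Ht Hp. specialize (HH t Ht).
    assert (e3*t*(e3*t^3+e2*t^2+e1*t+e0) = e3*e3*t^4+e3*e2*t^3+e3*e1*t^2+e3*e0*t+0) by ring.
    rewrite Hp in H0. lra.
Qed.

Lemma ev_nz3 d c3 c2 c1 c0 : (d = 1 \/ d = -1) -> (c3 <> 0 \/ c2 <> 0 \/ c1 <> 0 \/ c0 <> 0) ->
  exists H, forall t, H <= t -> c3*(d*t)^3 + c2*(d*t)^2 + c1*(d*t) + c0 <> 0.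
Proof.
  intros Hd Hnz.
  assert (dd : d*d = 1) by (destruct Hd; subst; ring).
  destruct (ev_nz3_base (c3*d) c2 (c1*d) c0) as [H HH].
  { assert (d <> 0) by (destruct Hd; lra).
    destruct Hnz as [h|[h|[h|h]]].
    - left. apply Rmult_integral_contrapositive; tauto.
    - tauto.
    - right; right; left. apply Rmult_integral_contrapositive; tauto.
    - tauto. }
  exists H. intros t Ht. specialize (HH t Ht).
  replace (c3*(d*t)^3 + c2*(d*t)^2 + c1*(d*t) + c0) with (c3*d*t^3*(d*d) + c2*t^2*(d*d) + c1*d*t + c0) by ring.
  rewrite dd. replace (c3*d*t^3*1 + c2*t^2*1 + c1*d*t + c0) with (c3*d*t^3 + c2*t^2 + c1*d*t + c0) by ring.
  exact HH.
Qed.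

Lemma ev_lin al be : 0 < be -> exists H, forall t, H <= t -> 0 < al + be * t.
Proof.
  intros Hb. exists (Rabs al / be + 1). intros t Ht.
  assert (Rabs al / be * be = Rabs al) by (field; lra).
  pose proof (Rle_abs (-al)). rewrite Rabs_Ropp in H0.
  assert (be * t >= be*(Rabs al / be + 1)) by (apply Rle_ge, Rmult_le_compat_l; lra).
  nra.
Qed.

Definition p5 (c0 c1 c2 c3 c4 c5 x : R) : R :=
  c0 + c1*x + c2*x^2 + c3*x^3 + c4*x^4 + c5*x^5.

Lemma fd5 c0 c1 c2 c3 c4 c5 t s : s <> 0 ->
  p5 c0 c1 c2 c3 c4 c5 t = 0 ->
  p5 c0 c1 c2 c3 c4 c5 (t+s) = 0 ->
  p5 c0 c1 c2 c3 c4 c5 (t+2*s) = 0 ->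
  p5 c0 c1 c2 c3 c4 c5 (t+3*s) = 0 ->
  p5 c0 c1 c2 c3 c4 c5 (t+4*s) = 0 ->
  p5 c0 c1 c2 c3 c4 c5 (t+5*s) = 0 ->
  c0 = 0 /\ c1 = 0 /\ c2 = 0 /\ c3 = 0 /\ c4 = 0 /\ c5 = 0.
Proof.
  intros Hs H0 H1 H2 H3 H4 H5. unfold p5 in *.
  assert (ps : forall n, s^n <> 0) by (intro n; apply pow_nonzero; exact Hs).
  assert (E5 : 120*c5*s^5 = 0).
  { assert (120*c5*s^5 = (c0 + c1*(t+5*s) + c2*(t+5*s)^2 + c3*(t+5*s)^3 + c4*(t+5*s)^4 + c5*(t+5*s)^5)
      - 5*(c0 + c1*(t+4*s) + c2*(t+4*s)^2 + c3*(t+4*s)^3 + c4*(t+4*s)^4 + c5*(t+4*s)^5)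
      + 10*(c0 + c1*(t+3*s) + c2*(t+3*s)^2 + c3*(t+3*s)^3 + c4*(t+3*s)^4 + c5*(t+3*s)^5)
      - 10*(c0 + c1*(t+2*s) + c2*(t+2*s)^2 + c3*(t+2*s)^3 + c4*(t+2*s)^4 + c5*(t+2*s)^5)
      + 5*(c0 + c1*(t+s) + c2*(t+s)^2 + c3*(t+s)^3 + c4*(t+s)^4 + c5*(t+s)^5)
      - (c0 + c1*t + c2*t^2 + c3*t^3 + c4*t^4 + c5*t^5)) by ring.
    rewrite H, H0, H1, H2, H3, H4, H5. ring. }
  assert (z5 : c5 = 0).
  { apply Rmult_integral in E5. destruct E5 as [E|E]; [lra| exfalso; exact (ps 5%nat E)]. }
  subst c5.
  assert (E4 : 24*c4*s^4 = 0).
  { assert (24*c4*s^4 = (c0 + c1*(t+4*s) + c2*(t+4*s)^2 + c3*(t+4*s)^3 + c4*(t+4*s)^4 + 0*(t+4*s)^5)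
      - 4*(c0 + c1*(t+3*s) + c2*(t+3*s)^2 + c3*(t+3*s)^3 + c4*(t+3*s)^4 + 0*(t+3*s)^5)
      + 6*(c0 + c1*(t+2*s) + c2*(t+2*s)^2 + c3*(t+2*s)^3 + c4*(t+2*s)^4 + 0*(t+2*s)^5)
      - 4*(c0 + c1*(t+s) + c2*(t+s)^2 + c3*(t+s)^3 + c4*(t+s)^4 + 0*(t+s)^5)
      + (c0 + c1*t + c2*t^2 + c3*t^3 + c4*t^4 + 0*t^5)) by ring.
    rewrite H, H0, H1, H2, H3, H4. ring. }
  assert (z4 : c4 = 0).
  { apply Rmult_integral in E4. destruct E4 as [E|E]; [lra| exfalso; exact (ps 4%nat E)]. }
  subst c4.
  assert (E3 : 6*c3*s^3 = 0).
  { assert (6*c3*s^3 = (c0 + c1*(t+3*s) + c2*(t+3*s)^2 + c3*(t+3*s)^3 + 0*(t+3*s)^4 + 0*(t+3*s)^5)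
      - 3*(c0 + c1*(t+2*s) + c2*(t+2*s)^2 + c3*(t+2*s)^3 + 0*(t+2*s)^4 + 0*(t+2*s)^5)
      + 3*(c0 + c1*(t+s) + c2*(t+s)^2 + c3*(t+s)^3 + 0*(t+s)^4 + 0*(t+s)^5)
      - (c0 + c1*t + c2*t^2 + c3*t^3 + 0*t^4 + 0*t^5)) by ring.
    rewrite H, H0, H1, H2, H3. ring. }
  assert (z3 : c3 = 0).
  { apply Rmult_integral in E3. destruct E3 as [E|E]; [lra| exfalso; exact (ps 3%nat E)]. }
  subst c3.
  assert (E2 : 2*c2*s^2 = 0).
  { assert (2*c2*s^2 = (c0 + c1*(t+2*s) + c2*(t+2*s)^2 + 0*(t+2*s)^3 + 0*(t+2*s)^4 + 0*(t+2*s)^5)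
      - 2*(c0 + c1*(t+s) + c2*(t+s)^2 + 0*(t+s)^3 + 0*(t+s)^4 + 0*(t+s)^5)
      + (c0 + c1*t + c2*t^2 + 0*t^3 + 0*t^4 + 0*t^5)) by ring.
    rewrite H, H0, H1, H2. ring. }
  assert (z2 : c2 = 0).
  { apply Rmult_integral in E2. destruct E2 as [E|E]; [lra| exfalso; exact (ps 2%nat E)]. }
  subst c2.
  assert (E1 : c1*s = 0).
  { assert (c1*s = (c0 + c1*(t+s) + 0*(t+s)^2 + 0*(t+s)^3 + 0*(t+s)^4 + 0*(t+s)^5)
      - (c0 + c1*t + 0*t^2 + 0*t^3 + 0*t^4 + 0*t^5)) by ring.
    rewrite H, H0, H1. ring. }
  assert (z1 : c1 = 0).
  { apply Rmult_integral in E1. destruct E1 as [E|E]; [lra| exfalso; exact (Hs E)]. }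
  subst c1.
  assert (c0 = 0) by (rewrite <- H0; ring).
  repeat split; lra.
Qed.

Lemma two_roots A B C A' B' C' : A <> 0 -> B*B - 4*A*C > 0 ->
  (forall m, A*m*m + B*m + C = 0 -> A'*m*m + B'*m + C' = 0) ->
  A*B' = A'*B /\ A*C' = A'*C.
Proof.
  intros HA HD Hq.
  set (D := B*B - 4*A*C) in *.
  assert (sD : sqrt D * sqrt D = D) by (apply sqrt_sqrt; lra).
  assert (sp : 0 < sqrt D) by (apply sqrt_lt_R0; lra).
  set (r1 := (-B + sqrt D)/(2*A)). set (r2 := (-B - sqrt D)/(2*A)).
  assert (P1 : A*r1*r1 + B*r1 + C = 0).
  { unfold r1. replace (A * ((- B + sqrt D) / (2 * A)) * ((- B + sqrt D) / (2 * A)) + B * ((- B + sqrt D) / (2 * A)) + C)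
      with ((sqrt D * sqrt D - (B*B - 4*A*C))/(4*A)) by (field; exact HA).
    unfold D in *. rewrite sD. unfold Rdiv. ring. }
  assert (P2 : A*r2*r2 + B*r2 + C = 0).
  { unfold r2. replace (A * ((- B - sqrt D) / (2 * A)) * ((- B - sqrt D) / (2 * A)) + B * ((- B - sqrt D) / (2 * A)) + C)
      with ((sqrt D * sqrt D - (B*B - 4*A*C))/(4*A)) by (field; exact HA).
    unfold D in *. rewrite sD. unfold Rdiv. ring. }
  assert (Q1 := Hq r1 P1). assert (Q2 := Hq r2 P2).
  assert (L1 : (A*B' - A'*B)*r1 + (A*C' - A'*C) = 0).
  { replace ((A*B' - A'*B)*r1 + (A*C' - A'*C)) with (A*(A'*r1*r1 + B'*r1 + C') - A'*(A*r1*r1 + B*r1 + C)) by ring.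
    rewrite Q1, P1. ring. }
  assert (L2 : (A*B' - A'*B)*r2 + (A*C' - A'*C) = 0).
  { replace ((A*B' - A'*B)*r2 + (A*C' - A'*C)) with (A*(A'*r2*r2 + B'*r2 + C') - A'*(A*r2*r2 + B*r2 + C)) by ring.
    rewrite Q2, P2. ring. }
  assert (dr : r1 - r2 <> 0).
  { unfold r1, r2. replace ((-B + sqrt D)/(2*A) - (-B - sqrt D)/(2*A)) with (sqrt D / A) by (field; exact HA).
    unfold Rdiv. apply Rmult_integral_contrapositive. split; [lra| apply Rinv_neq_0_compat; exact HA]. }
  assert (e1 : (A*B' - A'*B)*(r1 - r2) = 0) by lra.
  apply Rmult_integral in e1. destruct e1 as [e1|e1]; [|contradiction].
  split; [lra|]. rewrite e1 in L1. lra.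
Qed.

Definition Ef (a b k h m : R) : R :=
  (h - b - k*(m - a)) * ((h - b)*(2 + m*h) - h*h*(m - a)) - 2*(h*h - k*(2 + m*h)).
Definition Bf (a b k h : R) : R := (-(a*k) - b)*h*h + (b*b - a*b*k)*h + 2*b*k.
Definition Cf (a b k h : R) : R :=
  a*h^3 + (a*a*k - a*b)*h*h + (2*a*k - 4*b)*h + (2*b*b - 2*a*b*k + 4*k).
Definition Vf (a b k h : R) : R := a*h^3 + a*(a*k - b)*h*h + (4*a*k - 2*b)*h + 4*k.
Definition Wf (a b k h : R) : R := (a*k - b)*h + 2*k.

Lemma Ef_quad a b k h m : Ef a b k h m = (k*b*h)*m*m + Bf a b k h * m + Cf a b k h.
Proof. unfold Ef, Bf, Cf. ring. Qed.

Lemma slice_fwd a b k h m : h <> 0 -> 2 + m*h <> 0 ->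
  sigma_lp (a,b,k) m h (h*h/(2+m*h)) -> Ef a b k h m = 0.
Proof.
  intros Hh Hd [E1 _].
  set (w := h*h/(2+m*h)) in *.
  assert (Ef a b k h m = (2+m*h)*((h - b - k*(m-a))*(h - b - w*(m - a)) - 2*(w - k))).
  { unfold w, Ef. field. exact Hd. }
  rewrite H, E1. ring.
Qed.

Lemma slice_bwd a b k h m : h <> 0 -> 2 + m*h <> 0 ->
  Ef a b k h m = 0 -> h - b - k*(m - a) <> 0 -> sigma_lp (a,b,k) m h (h*h/(2+m*h)).
Proof.
  intros Hh Hd E HL. simpl.
  set (w := h*h/(2+m*h)).
  assert (Id : Ef a b k h m = (2+m*h)*((h - b - k*(m-a))*(h - b - w*(m - a)) - 2*(w - k))).
  { unfold w, Ef. field. exact Hd. }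
  rewrite E in Id. symmetry in Id. apply Rmult_integral in Id. destruct Id as [Id|Id]; [contradiction|].
  split; [lra|].
  intro Hwk. rewrite Hwk in Id.
  assert ((h - b - k*(m-a))*(h - b - k*(m-a)) = 0) by lra.
  apply Rmult_integral in H. tauto.
Qed.

Lemma slice_zero h m : h <> 0 -> 2 + m*h <> 0 -> sigma_lp (0,0,0) m h (h*h/(2+m*h)).
Proof.
  intros Hh Hd. apply slice_bwd; auto.
  - unfold Ef. ring.
  - replace (h - 0 - 0*(m-0)) with h by ring. exact Hh.
Qed.

Lemma valid_V a b k h m : h <> 0 -> Ef a b k h m = 0 -> Vf a b k h <> 0 -> 2 + m*h <> 0.
Proof.
  intros Hh E HV Hd.
  assert (h*Ef a b k h m - h*Vf a b k h = (2 + m*h)*(k*b*(h*m - 2) + Bf a b k h)).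
  { unfold Ef, Vf, Bf. ring. }
  rewrite E, Hd in H.
  assert (h * Vf a b k h = 0) by lra.
  apply Rmult_integral in H0. tauto.
Qed.

Lemma valid_W a b k h m : Ef a b k h m = 0 -> Wf a b k h <> 0 -> h - b - k*(m - a) <> 0.
Proof.
  intros E HW HL.
  assert (Ef a b k h m = (h - b - k*(m - a))*((h - b)*(2 + m*h) - h*h*(m - a) - 2*h) + 2*Wf a b k h).
  { unfold Ef, Wf. ring. }
  rewrite E, HL in H. apply HW. lra.
Qed.

Lemma sig_tr a1 b1 k1 a b k x y w :
  sigma_lp (a,b,k) x y w <->
  sigma_lp (a - a1, b - b1 - k1*(a - a1), k - k1) (x - a1) (y - b1 - k1*(x - a1)) (w - k1).
Proof.
  simpl.
  replace (y - b1 - k1 * (x - a1) - (b - b1 - k1 * (a - a1)) - (k - k1) * (x - a1 - (a - a1)))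
    with (y - b - k*(x - a)) by ring.
  replace (y - b1 - k1 * (x - a1) - (b - b1 - k1 * (a - a1)) - (w - k1) * (x - a1 - (a - a1)))
    with (y - b - w*(x - a)) by ring.
  replace (w - k1 - (k - k1)) with (w - k) by ring.
  split; intros [H1 H2]; split; auto; intro; apply H2; lra.
Qed.

Lemma poly_zero_ev (P : R -> Prop) d H c0 c1 c2 c3 c4 c5 :
  (d = 1 \/ d = -1) -> (forall t, H <= t -> P (d*t)) ->
  (forall h, P h -> p5 c0 c1 c2 c3 c4 c5 h = 0) ->
  c0 = 0 /\ c1 = 0 /\ c2 = 0 /\ c3 = 0 /\ c4 = 0 /\ c5 = 0.
Proof.
  intros Hd HP HF.
  assert (Hs : d <> 0) by (destruct Hd; lra).
  assert (pt : forall i, 0 <= i -> p5 c0 c1 c2 c3 c4 c5 (d*(H+1) + i*d) = 0).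
  { intros i Hi. apply HF. replace (d*(H+1) + i*d) with (d*(H+1+i)) by ring. apply HP. lra. }
  apply (fd5 _ _ _ _ _ _ (d*(H+1)) d Hs).
  - replace (d*(H+1)) with (d*(H+1) + 0*d) by ring. apply pt; lra.
  - replace (d*(H+1)+d) with (d*(H+1) + 1*d) by ring. apply pt; lra.
  - apply pt; lra.
  - apply pt; lra.
  - apply pt; lra.
  - apply pt; lra.
Qed.

Lemma quad_alg a b k A B K : k*b <> 0 ->
  k*b*(-(A*K) - B) - K*B*(-(a*k) - b) = 0 ->
  k*b*(B*B - A*B*K) - K*B*(b*b - a*b*k) = 0 ->
  k*b*A - K*B*a = 0 ->
  k*b*(2*A*K - 4*B) - K*B*(2*a*k - 4*b) = 0 ->
  k*b*(2*B*B - 2*A*B*K + 4*K) - K*B*(2*b*b - 2*a*b*k + 4*k) = 0 ->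
  (A = 0 /\ B = 0 /\ K = 0) \/ (A = a /\ B = b /\ K = k).
Proof.
  intros Hkb e2 e4 e1 e3 e6.
  assert (Hb : b <> 0) by (intro; apply Hkb; subst; ring).
  assert (Hk : k <> 0) by (intro; apply Hkb; subst; ring).
  set (l := K*B/(k*b)).
  assert (HKB : K*B = l*(k*b)) by (unfold l; field; auto).
  rewrite HKB in e2, e4, e1, e3, e6.
  assert (i1 : A = l*a).
  { apply (Rmult_eq_reg_l (k*b)); [|exact Hkb]. lra. }
  assert (i2 : A*K + B = l*(a*k + b)).
  { apply (Rmult_eq_reg_l (k*b)); [|exact Hkb]. lra. }
  assert (i3 : 2*(A*K) - 4*B = l*(2*a*k - 4*b)).
  { apply (Rmult_eq_reg_l (k*b)); [|exact Hkb]. lra. }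
  assert (i4 : B*B - A*B*K = l*(b*b - a*b*k)).
  { apply (Rmult_eq_reg_l (k*b)); [|exact Hkb]. lra. }
  assert (i6 : 2*B*B - 2*A*B*K + 4*K = l*(2*b*b - 2*a*b*k + 4*k)).
  { apply (Rmult_eq_reg_l (k*b)); [|exact Hkb]. lra. }
  assert (jB : B = l*b) by lra.
  assert (jK : K = l*k) by lra.
  assert (jl : l*l*(k*b) = l*(k*b)).
  { rewrite <- HKB, jK, jB. ring. }
  assert (l*(l-1)*(k*b) = 0) by lra.
  apply Rmult_integral in H. destruct H as [H|H]; [|contradiction].
  apply Rmult_integral in H. destruct H as [H|H].
  - left. rewrite i1, jB, jK, H. repeat split; ring.
  - right. assert (l = 1) by lra. rewrite i1, jB, jK, H0. repeat split; ring.
Qed.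

Lemma quad_core a b k A B K d H :
  k*b <> 0 -> (d = 1 \/ d = -1) ->
  (forall t, H <= t -> d*t <> 0 /\
      Bf a b k (d*t) * Bf a b k (d*t) - 4*(k*b*(d*t))*Cf a b k (d*t) > 0 /\
      Vf a b k (d*t) <> 0 /\ Wf a b k (d*t) <> 0) ->
  (forall h m, h <> 0 -> 2 + m*h <> 0 -> Ef a b k h m = 0 -> h - b - k*(m-a) <> 0 -> Ef A B K h m = 0) ->
  (A = 0 /\ B = 0 /\ K = 0) \/ (A = a /\ B = b /\ K = k).
Proof.
  intros Hkb Hd Hgood Hs.
  set (P := fun h => h <> 0 /\ Bf a b k h * Bf a b k h - 4*(k*b*h)*Cf a b k h > 0 /\
      Vf a b k h <> 0 /\ Wf a b k h <> 0).
  assert (rel : forall h, P h ->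
     k*b*Bf A B K h = K*B*Bf a b k h /\ k*b*Cf A B K h = K*B*Cf a b k h).
  { intros h [H0 [H1 [H2 H3]]].
    assert (Hkbh : k*b*h <> 0) by (apply Rmult_integral_contrapositive; tauto).
    destruct (two_roots (k*b*h) (Bf a b k h) (Cf a b k h) (K*B*h) (Bf A B K h) (Cf A B K h) Hkbh H1)
      as [r1 r2].
    { intros m Em. rewrite <- Ef_quad in Em. rewrite <- Ef_quad.
      assert (Hd2 : 2 + m*h <> 0) by (apply (valid_V a b k h m); auto).
      assert (HL : h - b - k*(m-a) <> 0) by (apply (valid_W a b k h m); auto).
      apply Hs; auto. }
    split.
    - apply (Rmult_eq_reg_r h); [|exact H0]. lra.
    - apply (Rmult_eq_reg_r h); [|exact H0]. lra. }
  destruct (poly_zero_ev P d H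
     (k*b*(2*B*K) - K*B*(2*b*k))
     (k*b*(B*B - A*B*K) - K*B*(b*b - a*b*k))
     (k*b*(-(A*K) - B) - K*B*(-(a*k) - b)) 0 0 0 Hd Hgood) as [_ [f1 [f2 _]]].
  { intros h Ph. destruct (rel h Ph) as [r _]. unfold p5. unfold Bf in r. lra. }
  destruct (poly_zero_ev P d H
     (k*b*(2*B*B - 2*A*B*K + 4*K) - K*B*(2*b*b - 2*a*b*k + 4*k))
     (k*b*(2*A*K - 4*B) - K*B*(2*a*k - 4*b))
     (k*b*(A*A*K - A*B) - K*B*(a*a*k - a*b))
     (k*b*A - K*B*a) 0 0 Hd Hgood) as [g0 [g1 [g2 [g3 _]]]].
  { intros h Ph. destruct (rel h Ph) as [_ r]. unfold p5. unfold Cf in r. lra. }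
  apply quad_alg; auto.
Qed.

Definition g0f (a b A B K : R) : R := ((4)*b*b*b*b*K + (-4)*b*b*b*B*K).
Definition g1f (a b A B K : R) : R := ((-2)*a*b*b*b*B*K + (4)*b*b*b*b*A*K + (-2)*b*b*b*b*B + (-2)*b*b*b*A*B*K + (2)*b*b*b*B*B + (-8)*b*b*b*K + (8)*b*b*B*K).
Definition g2f (a b A B K : R) : R := ((-1)*a*b*b*b*A*B*K + (1)*a*b*b*b*B*B + (8)*a*b*b*B*K + (1)*b*b*b*b*A*A*K + (-1)*b*b*b*b*A*B + (-10)*b*b*b*A*K + (2)*b*b*b*B + (2)*b*b*A*B*K + (-2)*b*b*B*B + (4)*b*b*K).
Definition g3f (a b A B K : R) : R := ((1)*a*a*b*b*B*K + (-1)*a*b*b*b*A*K + (-1)*a*b*b*b*B + (2)*a*b*b*A*B*K + (-2)*a*b*b*B*B + (-6)*a*b*B*K + (1)*b*b*b*b*A + (-2)*b*b*b*A*A*K + (2)*b*b*b*A*B + (6)*b*b*A*K).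
Definition g4f (a b A B K : R) : R := ((-2)*a*a*b*B*K + (2)*a*b*b*A*K + (2)*a*b*b*B + (-1)*a*b*A*B*K + (1)*a*b*B*B + (-2)*b*b*b*A + (1)*b*b*A*A*K + (-1)*b*b*A*B).
Definition g5f (a b A B K : R) : R := ((1)*a*a*B*K + (-1)*a*b*A*K + (-1)*a*b*B + (1)*b*b*A).

Lemma G_id a b A B K h : Bf a b 0 h <> 0 ->
  Bf a b 0 h * Bf a b 0 h * Ef A B K h (- Cf a b 0 h / Bf a b 0 h) =
  h*h*p5 (g0f a b A B K) (g1f a b A B K) (g2f a b A B K) (g3f a b A B K) (g4f a b A B K) (g5f a b A B K) h.
Proof.
  intros HB. rewrite Ef_quad. unfold p5, g0f, g1f, g2f, g3f, g4f, g5f.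
  field_simplify; [|exact HB].
  unfold Bf, Cf. ring.
Qed.

Lemma rat_alg a b A B K : b <> 0 ->
  g0f a b A B K = 0 -> g1f a b A B K = 0 -> g2f a b A B K = 0 -> g3f a b A B K = 0 ->
  (A = 0 /\ B = 0 /\ K = 0) \/ (A = a /\ B = b /\ K = 0).
Proof.
  intros Hb e0 e1 e2 e3. unfold g0f, g1f, g2f, g3f in *.
  assert (b3 : b*b*b <> 0) by (repeat apply Rmult_integral_contrapositive_currified; auto).
  assert (b2 : b*b <> 0) by (repeat apply Rmult_integral_contrapositive_currified; auto).
  assert (b4 : b*b*b*b <> 0) by (repeat apply Rmult_integral_contrapositive_currified; auto).
  assert (b5 : b*b*b*b*b <> 0) by (repeat apply Rmult_integral_contrapositive_currified; auto).
  assert (HK : K = 0).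
  { destruct (Req_dec K 0) as [z|nz]; [exact z|exfalso].
    assert (q0 : 4*(b*b*b)*K*(b - B) = 0) by (rewrite <- e0; ring).
    assert (HB : B = b).
    { apply Rmult_integral in q0. destruct q0 as [q|q]; [|lra].
      apply Rmult_integral in q. destruct q as [q|q]; [|contradiction].
      apply Rmult_integral in q. destruct q as [q|q]; [lra|contradiction]. }
    subst B.
    assert (q1 : 2*(b*b*b*b)*K*(A - a) = 0) by (rewrite <- e1; ring).
    assert (HA : A = a).
    { apply Rmult_integral in q1. destruct q1 as [q|q]; [|lra].
      apply Rmult_integral in q. destruct q as [q|q]; [|contradiction].
      apply Rmult_integral in q. destruct q as [q|q]; [lra|contradiction]. }
    subst A.
    assert (q2 : 4*(b*b)*K = 0) by (rewrite <- e2; ring).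
    apply Rmult_integral in q2. destruct q2 as [q|q]; [|contradiction].
    apply Rmult_integral in q. destruct q as [q|q]; [lra|contradiction]. }
  subst K.
  assert (q1 : 2*(b*b*b)*B*(B - b) = 0) by (rewrite <- e1; ring).
  apply Rmult_integral in q1. destruct q1 as [q|q].
  - apply Rmult_integral in q. destruct q as [q|q].
    + apply Rmult_integral in q. destruct q as [q|q]; [lra|contradiction].
    + subst B. left.
      assert (q3 : (b*b*b*b)*A = 0) by (rewrite <- e3; ring).
      apply Rmult_integral in q3. destruct q3 as [q'|q']; [contradiction|]. subst. auto.
  - assert (B = b) by lra. subst B. right.
    assert (q2 : (b*b*b*b*b)*(a - A) = 0) by (rewrite <- e2; ring).
    apply Rmult_integral in q2. destruct q2 as [q'|q']; [contradiction|]. repeat split; lra.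
Qed.

Lemma rat_core a b A B K H : b <> 0 ->
  (forall t, H <= t -> 1*t <> 0 /\ 1*t - b <> 0 /\ a*(1*t)*(1*t) - a*b*(1*t) - 2*b <> 0) ->
  (forall h m, h <> 0 -> 2 + m*h <> 0 -> Ef a b 0 h m = 0 -> h - b - 0*(m-a) <> 0 -> Ef A B K h m = 0) ->
  (A = 0 /\ B = 0 /\ K = 0) \/ (A = a /\ B = b /\ K = 0).
Proof.
  intros Hb Hgood Hs.
  set (P := fun h => h <> 0 /\ h - b <> 0 /\ a*h*h - a*b*h - 2*b <> 0).
  destruct (poly_zero_ev P 1 H (g0f a b A B K) (g1f a b A B K) (g2f a b A B K) (g3f a b A B K)
      (g4f a b A B K) (g5f a b A B K) (or_introl eq_refl) Hgood) as [e0 [e1 [e2 [e3 _]]]].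
  { intros h [H0 [H1 H2]].
    assert (HB : Bf a b 0 h <> 0).
    { replace (Bf a b 0 h) with (-b*h*(h-b)) by (unfold Bf; ring).
      repeat apply Rmult_integral_contrapositive_currified; auto. intro; apply Hb; lra. }
    set (m := - Cf a b 0 h / Bf a b 0 h).
    assert (E2 : Ef a b 0 h m = 0).
    { rewrite Ef_quad. unfold m. field. exact HB. }
    assert (Hd : 2 + m*h <> 0).
    { intro Z.
      assert ((2 + m*h)*Bf a b 0 h = -(h*h)*(a*h*h - a*b*h - 2*b)).
      { unfold m. field_simplify; [|exact HB]. unfold Bf, Cf. field. }
      rewrite Z in H3.
      assert (h*h*(a*h*h - a*b*h - 2*b) = 0) by lra.
      apply Rmult_integral in H4. destruct H4 as [q|q]; [|contradiction].
      apply Rmult_integral in q. tauto. }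
    assert (EQ : Ef A B K h m = 0) by (apply Hs; auto; lra).
    pose proof (G_id a b A B K h HB) as G. fold m in G. rewrite EQ in G.
    assert (hh : h*h <> 0) by (apply Rmult_integral_contrapositive; tauto).
    apply (Rmult_eq_reg_l (h*h)); [|exact hh]. lra. }
  apply rat_alg; auto.
Qed.

Lemma same_line a x y w : a <> 0 -> sigma_lp (0,0,0) x y w -> sigma_lp (a,0,0) x y w -> False.
Proof.
  simpl. intros Ha [E1 N1] [E2 N2].
  assert (y*w*a = 0) by (replace (y*w*a) with ((y - 0 - 0 * (x - a)) * (y - 0 - w * (x - a)) - (y - 0 - 0 * (x - 0)) * (y - 0 - w * (x - 0))) by ring; rewrite E1, E2; ring).
  apply Rmult_integral in H. destruct H as [H|H]; [|contradiction].
  apply Rmult_integral in H. destruct H as [H|H]; [|apply N1; lra].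
  subst y. apply N1. lra.
Qed.

Lemma same_point k x y w : k <> 0 -> sigma_lp (0,0,0) x y w -> sigma_lp (0,0,k) x y w -> False.
Proof.
  simpl. intros Hk [E1 N1] [E2 N2].
  assert (k*(x*(y - w*x) - 2) = 0).
  { replace (k*(x*(y - w*x) - 2)) with ((y - 0 - 0 * (x - 0)) * (y - 0 - w * (x - 0)) - (y - 0 - k * (x - 0)) * (y - 0 - w * (x - 0)) - 2*(w-0) + 2*(w-k)) by ring.
    rewrite E1, E2. ring. }
  apply Rmult_integral in H. destruct H as [H|H]; [contradiction|].
  assert ((y - w*x)*(y - w*x) = 0).
  { replace ((y - w*x)*(y - w*x)) with ((y - 0 - 0 * (x - 0)) * (y - 0 - w * (x - 0)) - w*(x*(y - w*x))) by ring.
    rewrite E1. replace (x*(y - w*x)) with 2 by lra. ring. }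
  apply Rmult_integral in H0. destruct H0 as [H0|H0]; rewrite H0 in H; lra.
Qed.

Ltac nzfrom HH t Ht := intro Z; apply (HH t Ht); nra.

Lemma main0 a b k : ~(k <> 0 /\ b = 0) -> (a,b,k) <> (0,0,0) ->
  (exists x y w, sigma_lp (0,0,0) x y w /\ sigma_lp (a,b,k) x y w) ->
  forall A B K, (forall x y w, sigma_lp (0,0,0) x y w /\ sigma_lp (a,b,k) x y w -> sigma_lp (A,B,K) x y w) ->
  (A,B,K) = (0,0,0) \/ (A,B,K) = (a,b,k).
Proof.
  intros Hcase Hne [x0 [y0 [w0 [G1 G2]]]] A B K Hyp.
  assert (Hs : forall h m, h <> 0 -> 2 + m*h <> 0 -> Ef a b k h m = 0 -> h - b - k*(m-a) <> 0 -> Ef A B K h m = 0).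
  { intros h m H0 H1 H2 H3. apply slice_fwd; auto. apply Hyp. split.
    - apply slice_zero; auto.
    - apply slice_bwd; auto. }
  destruct (Req_dec k 0) as [Hk|Hk].
  - subst k.
    assert (Hb : b <> 0).
    { intro Hb. subst b. assert (a <> 0) by (intro; apply Hne; subst; reflexivity).
      exact (same_line a x0 y0 w0 H G1 G2). }
    destruct (ev_nz3 1 0 0 1 0 (or_introl eq_refl)) as [H1 HH1]; [right; right; left; apply R1_neq_R0|].
    destruct (ev_nz3 1 0 0 1 (-b) (or_introl eq_refl)) as [H2 HH2]; [right; right; left; apply R1_neq_R0|].
    destruct (ev_nz3 1 0 a (-(a*b)) (-(2*b)) (or_introl eq_refl)) as [H3 HH3].
    { right; right; right. intro; apply Hb; lra. }
    set (H := Rmax H1 (Rmax H2 H3)).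
    assert (R1 : forall t, H <= t -> H1 <= t) by (intros t Ht; unfold H in Ht; pose proof (Rmax_l H1 (Rmax H2 H3)); lra).
    assert (R2 : forall t, H <= t -> H2 <= t) by (intros t Ht; unfold H in Ht; pose proof (Rmax_r H1 (Rmax H2 H3)); pose proof (Rmax_l H2 H3); lra).
    assert (R3 : forall t, H <= t -> H3 <= t) by (intros t Ht; unfold H in Ht; pose proof (Rmax_r H1 (Rmax H2 H3)); pose proof (Rmax_r H2 H3); lra).
    destruct (rat_core a b A B K H Hb) as [[-> [-> ->]]|[-> [-> ->]]].
    + intros t Ht. repeat split.
      * intro Z; apply (HH1 t (R1 t Ht)). rewrite Z. ring.
      * intro Z; apply (HH2 t (R2 t Ht)). replace (0 * (1 * t) ^ 3 + 0 * (1 * t) ^ 2 + 1 * (1 * t) + - b) with (1*t - b) by ring. exact Z.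
      * intro Z; apply (HH3 t (R3 t Ht)). replace (0 * (1 * t) ^ 3 + a * (1 * t) ^ 2 + - (a * b) * (1 * t) + - (2 * b)) with (a*(1*t)*(1*t) - a*b*(1*t) - 2*b) by ring. exact Z.
    + intros h m H0 H4 H5 H6. apply Hs; auto.
    + left; reflexivity.
    + right; reflexivity.
  - assert (Hb : b <> 0) by (intro; apply Hcase; tauto).
    assert (Hkb : k*b <> 0) by (apply Rmult_integral_contrapositive_currified; auto).
    assert (Hfin : forall d H, (d = 1 \/ d = -1) ->
      (forall t, H <= t -> d*t <> 0 /\
        Bf a b k (d*t) * Bf a b k (d*t) - 4*(k*b*(d*t))*Cf a b k (d*t) > 0 /\
        Vf a b k (d*t) <> 0 /\ Wf a b k (d*t) <> 0) ->
      (A,B,K) = (0,0,0) \/ (A,B,K) = (a,b,k)).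
    { intros d H Hd Hg. destruct (quad_core a b k A B K d H Hkb Hd Hg Hs) as [[-> [-> ->]]|[-> [-> ->]]].
      - left; reflexivity.
      - right; reflexivity. }
    assert (Hdisc : forall h, Bf a b k h * Bf a b k h - 4*(k*b*h)*Cf a b k h =
       (a*k - b)*(a*k - b)*h^4 + (-2*a*a*b*k*k + 4*a*b*b*k - 2*b*b*b)*h^3
       + (a*a*b*b*k*k - 2*a*b*b*b*k - 12*a*b*k*k + b*b*b*b + 12*b*b*k)*h^2
       + (4*a*b*b*k*k - 4*b*b*b*k - 16*b*k*k)*h + 4*b*b*k*k).
    { intro h. unfold Bf, Cf. ring. }
    assert (Hk4 : 4*k <> 0) by lra.
    destruct (Req_dec (a*k - b) 0) as [He|He].
    +
      assert (Ha : a <> 0) by (intro; subst a; apply Hb; lra).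
      assert (Hak : a*(k*k*k) <> 0) by (repeat apply Rmult_integral_contrapositive_currified; auto).
      set (d := if Rlt_dec 0 (a*(k*k*k)) then -1 else 1).
      assert (Hd : d = 1 \/ d = -1) by (unfold d; destruct (Rlt_dec 0 (a*(k*k*k))); auto).
      assert (Hsl : 0 < -16*(a*(k*k*k))*d).
      { unfold d; destruct (Rlt_dec 0 (a*(k*k*k))); [lra|].
        assert (a*(k*k*k) < 0) by (destruct (Rtotal_order (a*(k*k*k)) 0) as [z|[z|z]]; auto; contradiction).
        lra. }
      destruct (ev_nz3 d 0 0 1 0 Hd) as [H1 HH1]; [right; right; left; apply R1_neq_R0|].
      destruct (ev_lin (4*b*b*k*k) (-16*(a*(k*k*k))*d) Hsl) as [H2 HH2].
      destruct (ev_nz3 d a (a*(a*k - b)) (4*a*k - 2*b) (4*k) Hd) as [H3 HH3]; [auto|].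
      set (H := Rmax H1 (Rmax H2 H3)).
      assert (R1 : forall t, H <= t -> H1 <= t) by (intros t Ht; unfold H in Ht; pose proof (Rmax_l H1 (Rmax H2 H3)); lra).
      assert (R2 : forall t, H <= t -> H2 <= t) by (intros t Ht; unfold H in Ht; pose proof (Rmax_r H1 (Rmax H2 H3)); pose proof (Rmax_l H2 H3); lra).
      assert (R3 : forall t, H <= t -> H3 <= t) by (intros t Ht; unfold H in Ht; pose proof (Rmax_r H1 (Rmax H2 H3)); pose proof (Rmax_r H2 H3); lra).
      apply (Hfin d H Hd). intros t Ht. repeat split.
      * intro Z; apply (HH1 t (R1 t Ht)). rewrite Z. ring.
      * rewrite Hdisc. assert (eb : b = a*k) by lra. specialize (HH2 t (R2 t Ht)).
        rewrite eb in *. replace (a*k - a*k) with 0 by ring.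
        replace (4*(a*k)*(a*k)*k*k) with (4*b*b*k*k) by (rewrite eb; ring).
        nra.
      * intro Z; apply (HH3 t (R3 t Ht)). unfold Vf in Z. rewrite <- Z. ring.
      * unfold Wf. rewrite He. lra.
    + destruct (ev_nz3 1 0 0 1 0 (or_introl eq_refl)) as [H1 HH1]; [right; right; left; apply R1_neq_R0|].
      assert (Hsq : 0 < (a*k - b)*(a*k - b)).
      { destruct (Rtotal_order (a*k-b) 0) as [z|[z|z]]; [nra|contradiction|nra]. }
      destruct (ev_pos4 ((a*k - b)*(a*k - b)) (-2*a*a*b*k*k + 4*a*b*b*k - 2*b*b*b)
       (a*a*b*b*k*k - 2*a*b*b*b*k - 12*a*b*k*k + b*b*b*b + 12*b*b*k)
       (4*a*b*b*k*k - 4*b*b*b*k - 16*b*k*k) (4*b*b*k*k) Hsq) as [H2 HH2].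
      destruct (ev_nz3 1 a (a*(a*k - b)) (4*a*k - 2*b) (4*k) (or_introl eq_refl)) as [H3 HH3]; [auto|].
      destruct (ev_nz3 1 0 0 (a*k - b) (2*k) (or_introl eq_refl)) as [H4 HH4]; [auto|].
      set (H := Rmax (Rmax H1 H2) (Rmax H3 H4)).
      assert (R1 : forall t, H <= t -> H1 <= t /\ H2 <= t /\ H3 <= t /\ H4 <= t).
      { intros t Ht; unfold H in Ht.
        pose proof (Rmax_l (Rmax H1 H2) (Rmax H3 H4)); pose proof (Rmax_r (Rmax H1 H2) (Rmax H3 H4)).
        pose proof (Rmax_l H1 H2); pose proof (Rmax_r H1 H2); pose proof (Rmax_l H3 H4); pose proof (Rmax_r H3 H4).
        repeat split; lra. }
      apply (Hfin 1 H (or_introl eq_refl)). intros t Ht. destruct (R1 t Ht) as [r1 [r2 [r3 r4]]].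
      repeat split.
      * intro Z; apply (HH1 t r1). rewrite Z. ring.
      * rewrite Hdisc. specialize (HH2 t r2). replace (1*t) with t by ring. lra.
      * intro Z; apply (HH3 t r3). unfold Vf in Z. rewrite <- Z. ring.
      * intro Z; apply (HH4 t r4). unfold Wf in Z. replace (0*(1*t)^3 + 0*(1*t)^2 + (a*k-b)*(1*t) + 2*k) with ((a*k-b)*(1*t) + 2*k) by ring. exact Z.
Qed.

Lemma sig_tr0 a1 b1 k1 x y w :
  sigma_lp (a1,b1,k1) x y w <-> sigma_lp (0,0,0) (x - a1) (y - b1 - k1*(x - a1)) (w - k1).
Proof.
  rewrite (sig_tr a1 b1 k1 a1 b1 k1 x y w).
  replace (a1 - a1) with 0 by ring. replace (b1 - b1 - k1*0) with 0 by ring.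
  replace (k1 - k1) with 0 by ring. tauto.
Qed.

Lemma gen a1 b1 k1 a2 b2 k2 :
  ~(k2 - k1 <> 0 /\ b2 - b1 - k1*(a2 - a1) = 0) ->
  (a1,b1,k1) <> (a2,b2,k2) ->
  (exists x y w, sigma_lp (a1,b1,k1) x y w /\ sigma_lp (a2,b2,k2) x y w) ->
  forall a b k, (forall x y w, sigma_lp (a1,b1,k1) x y w /\ sigma_lp (a2,b2,k2) x y w -> sigma_lp (a,b,k) x y w) ->
  (a,b,k) = (a1,b1,k1) \/ (a,b,k) = (a2,b2,k2).
Proof.
  intros Hc Hne [x [y [w [G1 G2]]]] a b k Hyp.
  destruct (main0 (a2 - a1) (b2 - b1 - k1*(a2 - a1)) (k2 - k1) Hc) with
    (A := a - a1) (B := b - b1 - k1*(a - a1)) (K := k - k1) as [E|E].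
  - intro E. injection E. intros e3 e2 e1. apply Hne.
    assert (a2 = a1) by lra. assert (k2 = k1) by lra. subst. assert (b2 = b1) by lra. subst. reflexivity.
  - exists (x - a1), (y - b1 - k1*(x - a1)), (w - k1). split.
    + apply (sig_tr0 a1 b1 k1). exact G1.
    + apply (sig_tr a1 b1 k1 a2 b2 k2). exact G2.
  - intros X Y W [S1 S2].
    set (x' := X + a1). set (y' := Y + b1 + k1*X). set (w' := W + k1).
    assert (e1 : x' - a1 = X) by (unfold x'; ring).
    assert (e2 : y' - b1 - k1*(x' - a1) = Y) by (unfold x', y'; ring).
    assert (e3 : w' - k1 = W) by (unfold w'; ring).
    assert (T : sigma_lp (a,b,k) x' y' w').
    { apply Hyp. split.
      - apply (sig_tr0 a1 b1 k1). rewrite e2, e1, e3. exact S1.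
      - apply (sig_tr a1 b1 k1 a2 b2 k2). rewrite e2, e1, e3. exact S2. }
    apply (sig_tr a1 b1 k1 a b k) in T. rewrite e2, e1, e3 in T. exact T.
  - left. injection E. intros e3 e2 e1.
    assert (a = a1) by lra. assert (k = k1) by lra. subst. assert (b = b1) by lra. subst. reflexivity.
  - right. injection E. intros e3 e2 e1.
    assert (a = a2) by lra. assert (k = k2) by lra. subst. assert (b = b2) by lra. subst. reflexivity.
Qed.

Theorem lemma1 (q1 q2 : incidence_pair) :
  q1 <> q2 ->
  (exists x y w : R, sigma_lp q1 x y w /\ sigma_lp q2 x y w) ->
  forall q : incidence_pair,
    (forall x y w : R, sigma_lp q1 x y w /\ sigma_lp q2 x y w -> sigma_lp q x y w) ->
    q = q1 \/ q = q2.
Proof.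
  destruct q1 as [[a1 b1] k1]. destruct q2 as [[a2 b2] k2].
  intros Hne Hex [[a b] k] Hyp.
  destruct (classic (k2 - k1 <> 0 /\ b2 - b1 - k1*(a2 - a1) = 0)) as [Hc|Hc].
  - destruct Hc as [Hk Hb].
    assert (Hc' : ~(k1 - k2 <> 0 /\ b1 - b2 - k2*(a1 - a2) = 0)).
    { intros [_ Z].
      assert ((k2 - k1)*(a2 - a1) = 0) by lra.
      apply Rmult_integral in H. destruct H as [H|H]; [contradiction|].
      destruct Hex as [x [y [w [G1 G2]]]].
      apply (sig_tr a1 b1 k1) in G1. apply (sig_tr a1 b1 k1) in G2.
      replace (a1 - a1) with 0 in G1 by ring. replace (b1 - b1 - k1*0) with 0 in G1 by ring.
      replace (k1 - k1) with 0 in G1 by ring.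
      rewrite Hb in G2. replace (a2 - a1) with 0 in G2 by lra.
      exact (same_point (k2 - k1) _ _ _ Hk G1 G2). }
    destruct (gen a2 b2 k2 a1 b1 k1 Hc') with (a := a) (b := b) (k := k) as [E|E].
    + intro E; apply Hne; symmetry; exact E.
    + destruct Hex as [x [y [w [G1 G2]]]]. exists x, y, w. tauto.
    + intros x y w [S1 S2]. apply Hyp. tauto.
    + right; exact E.
    + left; exact E.
  - apply gen; auto.
Qed.
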